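(* Let $G$ be a modified planar graph with $m$ edges and let $\mathcal{T}$ be a separator tree of $G$ of height $\eta=O(\log m)$ in which every node $H$ satisfies $|S(H)|\le c\lceil\sqrt{|E(H)|}\rceil$ for a fixed constant $c$. Let $\mathcal{H}$ be a set of $K$ nodes of $\mathcal{T}$. Then \[\sum_{H\in\mathcal{P}_{\mathcal{T}}(\mathcal{H})}\big(|\partial H|+|F_H|\big)\le\widetilde{O}(\sqrt{mK}).\]
   Context: A modified planar graph is a graph obtained from a planar graph by adding two new vertices $s,t$ and any number of edges incident to them (parallel edges allowed). Separator tree: a rooted binary tree $\mathcal{T}$ whose nodes are regions (edge-induced subgraphs) $H$ of $G$, each storing vertex sets $\partial H$, $S(H)$, $F_H$, defined top-down: the root is $G$ with $\partial G=\emptyset$, $F_G=S(G)$; a non-leaf node $H$ has two children $D_1,D_2$ whose edge sets partition $E(H)$, with $V(D_1)\cap V(D_2)=S(H)$, $\partial D_j=(\partial H\cup S(H))\cap V(D_j)$, and $F_H=S(H)\setminus\partial H$; a node with constantly many edges is a leaf with $S(H)=\emptyset$ and $F_H=V(H)\setminus\partial H$. For a set $\mathcal{H}$ of nodes, $\mathcal{P}_{\mathcal{T}}(\mathcal{H})$ is the set of all nodes lying on a tree path from some $H\in\mathcal{H}$ to the root (including $H$ and the root). $\widetilde{O}$ hides polylogarithmic factors in $m$. *)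

(* Defs.v *)
From HB Require Import structures.
From mathcomp Require Import all_boot all_order all_algebra.
From mathcomp Require Import all_classical all_reals all_analysis.
From mathcomp Require Import Rstruct Rstruct_topology.
Set Implicit Arguments. Unset Strict Implicit. Unset Printing Implicit Defensive.
Import Order.TTheory GRing.Theory Num.Theory.

(* Graphs.  A finite undirected multigraph (parallel edges and loops allowed)
   with vertex type V and edge type E; edge e joins e1 e and e2 e.           *)

Section Graphs.
Variables (V E : finType) (e1 e2 : E -> V).

Definition planar_sub (VA : {set V}) (EA : {set E}) : Prop :=
  exists (pos : V -> (Rdefinitions.R * Rdefinitions.R)%type)
         (arc : E -> Rdefinitions.R -> (Rdefinitions.R * Rdefinitions.R)%type),
    {in VA &, injective pos} /\
    (forall e, e \in EA ->
       [/\ {within [set x : Rdefinitions.R | (0 <= x <= 1)%R], continuous (arc e)}%classic,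
           arc e 0%R = pos (e1 e),
           arc e 1%R = pos (e2 e),
           {in `]0%R, 1%R[%R &, injective (arc e)} &
           forall x v, x \in `]0%R, 1%R[%R -> v \in VA -> arc e x <> pos v]) /\
    (forall e f, e \in EA -> f \in EA -> e != f ->
       forall x y, x \in `]0%R, 1%R[%R -> y \in `]0%R, 1%R[%R -> arc e x <> arc f y).

Definition modified_planar : Prop :=
  exists s t : V, s != t /\
    planar_sub (~: [set s; t])
      [set e | [&& e1 e != s, e1 e != t, e2 e != s & e2 e != t]].

Definition Vof (A : {set E}) : {set V} :=
  [set v | [exists e in A, (e1 e == v) || (e2 e == v)]].

End Graphs.

Lemma ex_sq (n : nat) : exists r, n <= r * r.
Proof. exists n; case: n => // n; exact: leq_pmulr. Qed.
Definition ceil_sqrt (n : nat) : nat := ex_minn (ex_sq n).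

(* A node stores its region H (edge set) and, if it is not
   a leaf, its separator S(H) and two children.          *)

Inductive stree (V E : finType) :=
| SLeaf of {set E}
| SNode of {set E} & {set V} & stree V E & stree V E.
Arguments SLeaf {V E}.
Arguments SNode {V E}.

Section Trees.
Variables (V E : finType) (e1 e2 : E -> V).

Definition region (t : stree V E) : {set E} :=
  match t with SLeaf H => H | SNode H _ _ _ => H end.

Definition sep (t : stree V E) : {set V} :=
  match t with SLeaf _ => finset.set0 | SNode _ Sp _ _ => Sp end.

Fixpoint height (t : stree V E) : nat :=
  match t with SLeaf _ => 0 | SNode _ _ l r => (maxn (height l) (height r)).+1 end.

Fixpoint sep_tree_wf (lam : nat) (t : stree V E) : Prop :=
  match t with
  | SLeaf H => #|H| <= lam
  | SNode H Sp l r =>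
      [/\ lam < #|H|,
          region l :|: region r = H,
          [disjoint region l & region r],
          Vof e1 e2 (region l) :&: Vof e1 e2 (region r) = Sp &
          sep_tree_wf lam l /\ sep_tree_wf lam r]
  end.

Definition sep_tree (lam : nat) (t : stree V E) : Prop :=
  region t = [set: E] /\ sep_tree_wf lam t.

Fixpoint sep_bounded (c : nat) (t : stree V E) : Prop :=
  match t with
  | SLeaf _ => True
  | SNode H Sp l r => #|Sp| <= c * ceil_sqrt #|H| /\ sep_bounded c l /\ sep_bounded c r
  end.

(* Nodes are addressed by their path from the root (false = first child,
   true = second child). *)
Fixpoint subtree (t : stree V E) (p : seq bool) : option (stree V E) :=
  match p, t with
  | [::], _ => Some t
  | b :: p', SNode _ _ l r => subtree (if b then r else l) p'
  | _ :: _, SLeaf _ => None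
  end.

Definition valid_addr (t : stree V E) (p : seq bool) : bool :=
  if subtree t p is Some _ then true else false.

Fixpoint bnd_from (B : {set V}) (t : stree V E) (p : seq bool) : {set V} :=
  match p, t with
  | [::], _ => B
  | b :: p', SNode _ Sp l r =>
      let D := if b then r else l in
      bnd_from ((B :|: Sp) :&: Vof e1 e2 (region D)) D p'
  | _ :: _, SLeaf _ => finset.set0
  end.

Definition bnd (t : stree V E) (p : seq bool) : {set V} := bnd_from finset.set0 t p.

Definition Fset (t : stree V E) (p : seq bool) : {set V} :=
  match subtree t p with
  | Some (SNode _ Sp _ _) => Sp :\: bnd t p
  | Some (SLeaf H) => Vof e1 e2 H :\: bnd t p
  | None => finset.set0
  end.

Definition node_cost (t : stree V E) (p : seq bool) : nat :=
  #|bnd t p| + #|Fset t p|.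

End Trees.

(* P_T(Hs): all nodes on a path from some node of Hs to the root, i.e. all
   prefixes of the addresses in Hs, each listed once. *)
Definition prefixes (p : seq bool) : seq (seq bool) :=
  [seq take i p | i <- iota 0 (size p).+1].
Definition path_closure (Hs : seq (seq bool)) : seq (seq bool) :=
  undup (flatten (map prefixes Hs)).

(* Main.v *)
Require Import Defs.
From mathcomp Require Import all_boot all_order all_algebra.
From mathcomp Require Import zify.
Set Implicit Arguments. Unset Strict Implicit. Unset Printing Implicit Defensive.

Definition lefts (Hs : seq (seq bool)) : seq (seq bool) :=
  pmap (fun p => if p is false :: q then Some q else None) Hs.
Definition rights (Hs : seq (seq bool)) : seq (seq bool) :=
  pmap (fun p => if p is true :: q then Some q else None) Hs.

Arguments lefts : simpl never.
Arguments rights : simpl never.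

Lemma mem_prefixes (q p : seq bool) : (q \in prefixes p) = (take (size q) p == q).
Proof.
apply/mapP/eqP => [[i]|E].
- rewrite mem_iota add0n ltnS => /andP[_ hi] ->. by rewrite size_takel.
- exists (size q); last by rewrite E.
  by rewrite mem_iota add0n ltnS /= -E size_take_min geq_minr.
Qed.

Lemma mem_PC q Hs : (q \in path_closure Hs) = has (fun p => take (size q) p == q) Hs.
Proof.
rewrite mem_undup; apply/flatten_mapP/hasP => -[p hp]; rewrite ?mem_prefixes => h;
  by exists p; rewrite ?mem_prefixes.
Qed.

Lemma has_pmap (T U : Type) (g : T -> option U) (P : pred U) s :
  has P (pmap g s) = has (fun x => if g x is Some y then P y else false) s.
Proof. elim: s => //= x s IH; case: (g x) => //= y; by rewrite IH. Qed.

Lemma nil_notin_map (b : bool) (X : seq (seq bool)) : ([::] \in map (cons b) X) = false.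
Proof. by apply/negbTE/mapP => -[y _]. Qed.

Lemma cons_inj (b : bool) : injective (cons b).
Proof. by move=> x y []. Qed.

Lemma size_lr Hs : size (lefts Hs) + size (rights Hs) <= size Hs.
Proof.
elim: Hs => //= p Hs IH; rewrite /lefts /rights /=.
case: p => [|[|] q] /=; rewrite -/(lefts Hs) -/(rights Hs) //=; lia.
Qed.

Lemma PC_decomp (f : seq bool -> nat) Hs :
  \sum_(p <- path_closure Hs) f p =
  (if Hs is [::] then 0 else f [::]) +
  \sum_(p <- path_closure (lefts Hs)) f (false :: p) +
  \sum_(p <- path_closure (rights Hs)) f (true :: p).
Proof.
pose R := fun Hs : seq (seq bool) => (if Hs is [::] then [::] else [:: [::]]) ++
   (map (cons false) (path_closure (lefts Hs)) ++ map (cons true) (path_closure (rights Hs))).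
have eqR : perm_eq (path_closure Hs) (R Hs).
  apply: uniq_perm; first exact: undup_uniq.
  - rewrite /R cat_uniq cat_uniq !(map_inj_uniq (@cons_inj _)) !undup_uniq /=.
    apply/and4P; split.
    + by case: Hs.
    + apply/hasPn => x; rewrite mem_cat => /orP[|] /mapP[y _ ->]; by case: Hs.
    + apply/hasPn => x /mapP[y _ ->]; apply/mapP => -[z _] //.
    + by [].
  - move=> q; rewrite /R mem_PC !mem_cat; case: q => [|b q].
    + rewrite !nil_notin_map; case: Hs => //= x s; by rewrite take0.
    + have -> : (b :: q \in (if Hs is [::] then [::] else [:: [::]])) = false by case: Hs.
      rewrite /=; case: b; rewrite ?mem_map //; try exact: cons_inj.
      * have -> : (true :: q \in [seq false :: i | i <- path_closure (lefts Hs)]) = false.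
          by apply/negbTE/mapP => -[y _].
        rewrite mem_PC has_pmap /=; apply: eq_has => p.
        by case: p => [|[|] p] //=; rewrite eqseq_cons.
      * have -> : (false :: q \in [seq true :: i | i <- path_closure (rights Hs)]) = false.
          by apply/negbTE/mapP => -[y _].
        rewrite orbF mem_PC has_pmap /=; apply: eq_has => p.
        by case: p => [|[|] p] //=; rewrite eqseq_cons.
rewrite (perm_big _ eqR) /R; clear eqR.
rewrite !big_cat !big_map /= addnA.
by case: Hs => [|x s]; rewrite ?big_nil ?big_seq1.
Qed.

Lemma cardsU_le (T : finType) (A B : {set T}) : #|A :|: B| <= #|A| + #|B|.
Proof. rewrite -cardsUI; exact: leq_addr. Qed.

Section Main.
Variables (V E : finType) (e1 e2 : E -> V).
Local Notation Vo := (Vof e1 e2).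

Definition costB (B : {set V}) (t : stree V E) (p : seq bool) : nat :=
  #|bnd_from e1 e2 B t p| + #|(match subtree t p with
     | Some (SNode _ Sp _ _) => Sp :\: bnd_from e1 e2 B t p
     | Some (SLeaf H) => Vo H :\: bnd_from e1 e2 B t p
     | None => finset.set0 end : {set V})|.

Lemma node_costE t p : node_cost e1 e2 t p = costB set0 t p.
Proof. reflexivity. Qed.

Fixpoint SS (t : stree V E) (Hs : seq (seq bool)) : nat :=
  if Hs is [::] then 0 else
  match t with SLeaf _ => 0 | SNode _ Sp l r => #|Sp| + SS l (lefts Hs) + SS r (rights Hs) end.

Fixpoint LS (t : stree V E) (Hs : seq (seq bool)) : nat :=
  if Hs is [::] then 0 else
  match t with SLeaf H => #|Vo H| | SNode _ _ l r => LS l (lefts Hs) + LS r (rights Hs) end.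

Lemma card_Vo H : #|Vo H| <= 2 * #|H|.
Proof.
have sub : Vo H \subset (e1 @: H) :|: (e2 @: H).
  apply/subsetP => v; rewrite inE => /existsP[e /andP[eH /orP[]/eqP <-]];
    rewrite inE; apply/orP; [left|right]; exact: imset_f.
apply: leq_trans (subset_leq_card sub) _.
apply: leq_trans (cardsU_le _ _) _.
have := leq_imset_card e1 H; have := leq_imset_card e2 H; lia.
Qed.

Lemma lemma1 lam t : sep_tree_wf e1 e2 lam t -> forall B Hs,
  \sum_(p <- path_closure Hs) costB B t p <=
  (height t).+1 * (#|B| + 2 * SS t Hs) + SS t Hs + LS t Hs.
Proof.
elim: t => [H|H Sp l IHl r IHr] /= wf B Hs; rewrite PC_decomp.
- rewrite big1; last by move=> p _; rewrite /costB /= cards0.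
  rewrite big1; last by move=> p _; rewrite /costB /= cards0.
  rewrite !addn0.
  case: Hs => [|x s] //.
  rewrite /costB /=.
  have := subset_leq_card (subsetDl (Vo H) B); lia.
case: wf => _ Hu Hd Hsep [wl wr].
set Bl := (B :|: Sp) :&: Vo (region l).
set Br := (B :|: Sp) :&: Vo (region r).
have -> : \sum_(p <- path_closure (lefts Hs)) costB B (SNode H Sp l r) (false :: p)
   = \sum_(p <- path_closure (lefts Hs)) costB Bl l p by [].
have -> : \sum_(p <- path_closure (rights Hs)) costB B (SNode H Sp l r) (true :: p)
   = \sum_(p <- path_closure (rights Hs)) costB Br r p by [].
have hl := IHl wl Bl (lefts Hs).
have hr := IHr wr Br (rights Hs).
have key : #|Bl| + #|Br| <= #|B| + 2 * #|Sp|.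
  rewrite -cardsUI.
  have s1 : Bl :|: Br \subset B :|: Sp.
    apply/subsetP => v; rewrite !inE; case/orP => /andP[-> _] //.
  have s2 : Bl :&: Br \subset Sp.
    apply/subsetP => v; rewrite -Hsep !inE => /andP[/andP[_ a] /andP[_ b]].
    by rewrite a b.
  have := subset_leq_card s1; have := subset_leq_card s2; have := cardsU_le B Sp; lia.
have hlh : (height l).+1 <= (maxn (height l) (height r)).+1 by rewrite ltnS leq_maxl.
have hrh : (height r).+1 <= (maxn (height l) (height r)).+1 by rewrite ltnS leq_maxr.
set h := (maxn (height l) (height r)).+1 in hlh hrh *.
have ml := leq_mul hlh (leqnn (#|Bl| + 2 * SS l (lefts Hs))).
have mr := leq_mul hrh (leqnn (#|Br| + 2 * SS r (rights Hs))).
have mk : h * (#|Bl| + 2 * SS l (lefts Hs)) + h * (#|Br| + 2 * SS r (rights Hs))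
   <= h * (#|B| + 2 * (#|Sp| + SS l (lefts Hs) + SS r (rights Hs))).
  rewrite -mulnDr leq_mul2l; apply/orP; right; lia.
case: Hs hl hr ml mr mk => [|x s] hl hr ml mr mk.
  by rewrite /lefts /rights /= !big_nil.
rewrite /=.
have root : costB B (SNode H Sp l r) [::] <= #|B| + #|Sp|.
  rewrite /costB /=; have := subset_leq_card (subsetDl Sp B); lia.
set SL := SS l _ in hl ml mr mk *; set SR := SS r _ in hr ml mr mk *.
set LL := LS l _ in hl *; set LR := LS r _ in hr *.
lia.
Qed.

End Main.
Lemma sq_le m n : m * m <= n * n -> m <= n.
Proof. rewrite leqNgt => H; rewrite leqNgt; apply/negP => lt; move: H; by rewrite (ltn_mul lt lt). Qed.
Lemma four_pq p q : 4 * (p * q) <= (p + q) * (p + q).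
Proof.
case/orP: (leq_total p q) => /subnKC <-; set d := (_ - _);
  [have := leq0n (d * d) | have := leq0n (d*d)]; lia.
Qed.
Lemma G1 D a b x1 y1 x2 y2 : a * a <= D * x1 * y1 -> b * b <= D * x2 * y2 ->
  (a + b) * (a + b) <= D * (x1 + x2) * (y1 + y2).
Proof.
move=> ha hb.
have h1 : (a * b) * (a * b) <= (D * (x1 * y2)) * (D * (x2 * y1)).
  have := leq_mul ha hb; lia.
have h2 := four_pq (D * (x1 * y2)) (D * (x2 * y1)).
have h3 : 2 * (a * b) <= D * (x1 * y2) + D * (x2 * y1).
  apply: sq_le; lia.
lia.
Qed.
Lemma G2 Z h x y : x * x <= Z -> y * y <= (h * h) * Z -> (x + y) * (x + y) <= (h.+1 * h.+1) * Z.
Proof.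
move=> hx hy.
have h3 : x * y <= h * Z.
  apply: sq_le; have := leq_mul hx hy; lia.
lia.
Qed.

Lemma ceil_sqrt_sq n : ceil_sqrt n * ceil_sqrt n <= 4 * n.
Proof.
rewrite /ceil_sqrt; case: ex_minnP => r hr hmin.
case: r hr hmin => [|r] hr hmin; first lia.
have : ~~ (n <= r * r) by apply/negP => /hmin; lia.
rewrite -ltnNge => hlt; nia.
Qed.

Section Main2.
Variables (V E : finType) (e1 e2 : E -> V).

Lemma card_regions (H : {set E}) (l r : stree V E) :
  region l :|: region r = H -> [disjoint region l & region r] ->
  #|region l| + #|region r| = #|H|.
Proof. move=> Hu Hd; by rewrite -cardsUI Hu (disjoint_setI0 Hd) cards0 addn0. Qed.

Lemma lemma2 c lam (t : stree V E) : sep_tree_wf e1 e2 lam t -> sep_bounded c t -> forall Hs,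
  SS t Hs * SS t Hs <= c * c * ((height t).+1 * (height t).+1) * 4 * size Hs * #|region t|.
Proof.
elim: t => [H|H Sp l IHl r IHr] /= wf sb Hs; first by case: Hs.
case: wf => _ Hu Hd Hsep [wl wr]; case: sb => sbS [sbl sbr].
case: Hs => [|x s] //=.
have hlh : (height l).+1 <= (maxn (height l) (height r)).+1 by rewrite ltnS leq_maxl.
have hrh : (height r).+1 <= (maxn (height l) (height r)).+1 by rewrite ltnS leq_maxr.
set h := (maxn (height l) (height r)).+1 in hlh hrh *.
have hl := IHl wl sbl (lefts (x :: s)).
have hr := IHr wr sbr (rights (x :: s)).
set D := c * c * (h * h) * 4.
have hl' : SS l (lefts (x :: s)) * SS l (lefts (x :: s)) <= D * size (lefts (x :: s)) * #|region l|.
  apply: leq_trans hl _; rewrite /D; repeat apply: leq_mul => //.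
have hr' : SS r (rights (x :: s)) * SS r (rights (x :: s)) <= D * size (rights (x :: s)) * #|region r|.
  apply: leq_trans hr _; rewrite /D; repeat apply: leq_mul => //.
have g1 := @G1 _ _ _ _ _ _ _ hl' hr'.
have hK := size_lr (x :: s).
have hm := card_regions Hu Hd.
set SL := SS l _ in g1 *; set SR := SS r _ in g1 *.
set Kl := size (lefts _) in g1 hK; set Kr := size (rights _) in g1 hK.
set ml := #|region l| in g1 hm; set mr := #|region r| in g1 hm.
set K := size (x :: s) in hK.
have g1' : (SL + SR) * (SL + SR) <= h * h * (c * c * 4 * K * #|H|).
  apply: leq_trans g1 _; rewrite -hm.
  have : D * (Kl + Kr) <= D * K by rewrite leq_mul2l hK orbT.
  move=> /(leq_mul)/(_ (leqnn (ml + mr))) => H1; apply: leq_trans H1 _; rewrite /D; lia.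
have hS : #|Sp| * #|Sp| <= c * c * 4 * K * #|H|.
  have := leq_mul sbS sbS; have := ceil_sqrt_sq #|H|.
  set q := ceil_sqrt _ => hq hs.
  have hK1 : 1 <= K by [].
  apply: leq_trans hs _.
  have -> : c * q * (c * q) = c * c * (q * q) by lia.
  have : c * c * (q * q) <= c * c * (4 * #|H|) by rewrite leq_mul2l hq orbT.
  move=> H1; apply: leq_trans H1 _.
  have := leq_mul (leqnn (c * c * 4 * #|H|)) hK1; lia.
have := @G2 _ _ _ _ hS g1'.
have -> : #|Sp| + SL + SR = #|Sp| + (SL + SR) by lia.
move=> H1; apply: leq_trans H1 _; rewrite /K /=; lia.
Qed.

Lemma lemma3 lam (t : stree V E) : sep_tree_wf e1 e2 lam t -> forall Hs,
  LS e1 e2 t Hs <= 2 * #|region t| /\ LS e1 e2 t Hs <= 2 * lam * size Hs.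
Proof.
elim: t => [H|H Sp l IHl r IHr] /= wf Hs.
  case: Hs => [|x s] //=; have := card_Vo e1 e2 H; split; nia.
case: wf => _ Hu Hd Hsep [wl wr].
case: Hs => [|x s] //=.
have [a1 a2] := IHl wl (lefts (x :: s)).
have [b1 b2] := IHr wr (rights (x :: s)).
have hK := size_lr (x :: s).
have hm := card_regions Hu Hd.
split; first lia.
set Kl := size (lefts _) in a2 hK; set Kr := size (rights _) in b2 hK.
have : 2 * lam * (Kl + Kr) <= 2 * lam * (size s).+1 by rewrite leq_mul2l hK orbT.
lia.
Qed.

End Main2.

Lemma sq2 u v : (u + v) * (u + v) <= 2 * (u * u + v * v).
Proof.
case/orP: (leq_total u v) => /subnKC <-; set d := (_ - _);
  [have := leq0n (d * d) | have := leq0n (d*d)]; lia.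
Qed.

Theorem mainTheorem5 :
  forall c lam a : nat, exists C k : nat,
  forall (V E : finType) (e1 e2 : E -> V) (t : stree V E) (Hs : seq (seq bool)),
    modified_planar e1 e2 ->
    sep_tree e1 e2 lam t ->
    sep_bounded c t ->
    height t <= a * (trunc_log 2 #|E|).+1 ->
    uniq Hs ->
    all (valid_addr t) Hs ->
    (\sum_(p <- path_closure Hs) node_cost e1 e2 t p) ^ 2
      <= C * (trunc_log 2 #|E|).+1 ^ k * (#|E| * size Hs).
Proof.
move=> c lam a.
exists (8 * ((2*a+3)*(2*a+3)) * (c*c) * ((a+1)*(a+1)) + 8*lam), 4.
move=> V E e1 e2 t Hs _ [Hroot wf] sb hh _ _.
rewrite (eq_bigr _ (fun p _ => node_costE e1 e2 t p)).
have h1 := lemma1 wf set0 Hs; rewrite cards0 in h1.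
have h2 := lemma2 wf sb Hs; rewrite Hroot cardsT in h2.
have [h3a h3b] := lemma3 wf Hs; rewrite Hroot cardsT in h3a.
set S := \sum_(p <- _) _ in h1 *.
set SSv := SS t Hs in h1 h2; set LSv := LS e1 e2 t Hs in h1 h3a h3b.
set hg := height t in h1 h2 hh.
set L1 := (trunc_log 2 #|E|).+1 in hh *.
set K := size Hs in h2 h3b *; set m := #|E| in h2 h3a *.
have s1 : S <= (2 * hg + 3) * SSv + LSv by lia.
have s2 : S * S <= 2 * ((2 * hg + 3) * SSv * ((2 * hg + 3) * SSv) + LSv * LSv).
  exact: leq_trans (leq_mul s1 s1) (sq2 _ _).
have L1p : 1 <= L1 by [].
have b1 : 2 * hg + 3 <= (2 * a + 3) * L1 by lia.
have b2 : hg.+1 <= (a + 1) * L1 by lia.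
have s3 : (2 * hg + 3) * SSv * ((2 * hg + 3) * SSv) <=
   ((2 * a + 3) * L1 * ((2 * a + 3) * L1)) * (c * c * ((a + 1) * L1 * ((a + 1) * L1)) * 4 * K * m).
  have -> : (2 * hg + 3) * SSv * ((2 * hg + 3) * SSv) = ((2 * hg + 3) * (2 * hg + 3)) * (SSv * SSv) by lia.
  apply: leq_mul; first exact: leq_mul.
  apply: leq_trans h2 _; repeat apply: leq_mul => //.
have s4 : LSv * LSv <= 2 * m * (2 * lam * K) := leq_mul h3a h3b.
have L4 : 1 <= L1 * L1 * L1 * L1 by rewrite !muln_gt0 L1p.
have s5 : lam * K * m <= lam * K * m * (L1 * L1 * L1 * L1) by rewrite leq_pmulr.
rewrite !expnS expn0 !muln1.
apply: leq_trans s2 _.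
lia.
Qed.
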